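(* Let $\Gamma$ be a connected signed graph on $N$ vertices containing edges of both signs, with signed Laplacian $\mathcal{L}$. For each $i$ let $D_i=\{z\in\mathbb{C}:|z-\mathcal{L}_{ii}|\le\sum_{j\ne i}|\mathcal{L}_{ij}|\}$ be the $i$-th Gershgorin disc, and let $n$ be the number of indices $i$ for which $0$ lies in the interior of $D_i$. Then $n\ge\tau(\Gamma)+1$.
   Context: A signed graph $\Gamma$ is a finite simple undirected graph with vertex set $\{1,\dots,N\}$ in which every edge $\{i,j\}$ carries a nonzero real weight $\gamma_{ij}$, which may be of either sign ($\gamma_{ij}=0$ for non-edges). The signed Laplacian has $\mathcal{L}_{ij}=\gamma_{ij}$ for $i\ne j$ and $\mathcal{L}_{ii}=-\sum_{k\ne i}\gamma_{ik}$. $\Gamma_+$ (resp. $\Gamma_-$) is the spanning subgraph on all vertices containing exactly the positively (resp. negatively) weighted edges; $c(H)$ is the number of connected components of $H$; the flexibility is $\tau(\Gamma)=N-c(\Gamma_-)-c(\Gamma_+)+1$. *)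

(* Defs.v *)
From mathcomp Require Import all_boot all_order all_algebra.
Set Implicit Arguments. Unset Strict Implicit. Unset Printing Implicit Defensive.
Import Order.TTheory GRing.Theory Num.Theory.
Local Open Scope ring_scope.

Section SignedGraph.
Variables (R : realFieldType) (N : nat).

(* A signed graph on vertex set 'I_N is given by its weight function gamma:
   gamma i j <> 0 iff {i,j} is an edge; simple undirected means gamma is
   symmetric with zero diagonal. *)
Definition signed_graph (gamma : 'I_N -> 'I_N -> R) : Prop :=
  (forall i j, gamma i j = gamma j i) /\ (forall i, gamma i i = 0).

Definition signed_laplacian (gamma : 'I_N -> 'I_N -> R) : 'M[R]_N :=
  \matrix_(i, j) (if i == j then - \sum_(k | k != i) gamma i k else gamma i j).

Definition edge_rel (gamma : 'I_N -> 'I_N -> R) : rel 'I_N :=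
  fun i j => gamma i j != 0.
Definition pos_rel (gamma : 'I_N -> 'I_N -> R) : rel 'I_N :=
  fun i j => 0 < gamma i j.
Definition neg_rel (gamma : 'I_N -> 'I_N -> R) : rel 'I_N :=
  fun i j => gamma i j < 0.

Definition ncomp (e : rel 'I_N) : nat := n_comp (connect e) 'I_N.

Definition connected_graph (gamma : 'I_N -> 'I_N -> R) : Prop :=
  forall i j, connect (edge_rel gamma) i j.

Definition flexibility (gamma : 'I_N -> 'I_N -> R) : int :=
  (N%:Z - (ncomp (neg_rel gamma))%:Z - (ncomp (pos_rel gamma))%:Z + 1)%R.

(* Since the centre L_ii is real, 0 lies in the
   interior (open disc {z : |z - L_ii| < r_i}) iff |0 - L_ii| < r_i. *)
Definition gersh_radius (L : 'M[R]_N) (i : 'I_N) : R :=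
  \sum_(j | j != i) `|L i j|.
Definition zero_in_gersh_interior (L : 'M[R]_N) (i : 'I_N) : bool :=
  `|0 - L i i| < gersh_radius L i.

Definition n_gersh (L : 'M[R]_N) : nat :=
  #|[set i | zero_in_gersh_interior L i]|.

End SignedGraph.

(* Main.v *)
Require Import Defs.
From mathcomp Require Import all_boot all_order all_algebra.
Import Order.TTheory GRing.Theory Num.Theory.
Local Open Scope ring_scope.
From mathcomp Require Import zify.

Lemma iso_connect (T : finType) (e : rel T) x y :
  (forall z, ~~ e x z) -> connect e x y -> y = x.
Proof.
move=> hx /connectP[[|z p] /= hp ->] //.
by move/andP: hp => [hxz _]; move: (hx z); rewrite hxz.
Qed.

Lemma ncomp_ge (N : nat) (e : rel 'I_N) (v w : 'I_N) :
  symmetric e -> e v w ->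
  (#|[set x | [forall z, ~~ e x z]]| + 1 <= ncomp e)%N.
Proof.
move=> se evw.
set I := [set x | [forall z, ~~ e x z]].
set E := connect (connect e).
have sub : forall x y, E x y -> connect e x y.
  by move=> x y; apply: connect_sub => a b h.
have symE : connect_sym (connect e) by apply: sym_connect_sym; apply: sym_connect_sym.
have isoE : forall x, x \in I -> forall y, E x y -> y = x.
  move=> x; rewrite inE => /forallP hx y /sub; exact: iso_connect.
have rI : forall x, x \in I -> roots (connect e) x.
  move=> x xI; apply/eqP; apply: isoE => //; exact: connect_root.
have rv : fingraph.root (connect e) v \notin I.
  apply/negP => rI'.
  have eq := isoE _ rI' v (etrans (symE _ _) (connect_root _ v)).
  move: rI'; rewrite inE -eq => /forallP /(_ w); by rewrite evw.
rewrite /ncomp /n_comp_mem addnC; have := cardsU1 (fingraph.root (connect e) v) I; rewrite rv => <-.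
apply: subset_leq_card; apply/subsetP => x; rewrite !inE.
case/orP => [/eqP -> | xI]; first by rewrite roots_root.
by rewrite andbT; apply: rI; rewrite inE.

Qed.

Lemma strict_tri (R : realFieldType) (I : finType) (P : pred I) (F : I -> R) j k :
  P j -> 0 < F j -> P k -> F k < 0 ->
  `|\sum_(i | P i) F i| < \sum_(i | P i) `|F i|.
Proof.
move=> Pj Fj Pk Fk.
have [S0|S0] := lerP 0 (\sum_(i | P i) F i).
  rewrite ger0_norm // (bigD1 k) //= [X in _ < X](bigD1 k) //=.
  apply: ltr_leD; first by rewrite ltr0_norm // (lt_trans Fk) // oppr_gt0.
  by apply: ler_sum => i _; apply: ler_norm.
rewrite ltr0_norm // -sumrN (bigD1 j) //= [X in _ < X](bigD1 j) //=.
apply: ltr_leD; first by rewrite gtr0_norm // (lt_trans _ Fj) // oppr_lt0.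
by apply: ler_sum => i _; rewrite -normrN; apply: ler_norm.
Qed.

Lemma gersh_mixed (R : realFieldType) (N : nat) (gamma : 'I_N -> 'I_N -> R) (i j k : 'I_N) :
  signed_graph gamma -> 0 < gamma i j -> gamma i k < 0 ->
  zero_in_gersh_interior (signed_laplacian gamma) i.
Proof.
move=> [_ g0] hj hk.
have ji : j != i by apply: contraTneq hj => ->; rewrite g0 ltxx.
have ki : k != i by apply: contraTneq hk => ->; rewrite g0 ltxx.
rewrite /zero_in_gersh_interior /gersh_radius mxE eqxx sub0r opprK.
rewrite [X in _ < X](eq_bigr (fun l => `|gamma i l|)); last by move=> l li; rewrite /signed_laplacian mxE eq_sym (negbTE li).
exact: (@strict_tri R _ (fun l => l != i) (gamma i) j k ji hj ki hk).
Qed.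

Theorem mainTheorem12 (R : realFieldType) (N : nat) (gamma : 'I_N -> 'I_N -> R) :
  signed_graph gamma ->
  connected_graph gamma ->
  (exists i j, 0 < gamma i j) ->
  (exists i j, gamma i j < 0) ->
  flexibility gamma + 1 <= (n_gersh (signed_laplacian gamma))%:Z.
Proof.
move=> sg _ [ip [jp hp]] [iN [jN hn]].
have sym := sg.1.
set M := [set i | zero_in_gersh_interior (signed_laplacian gamma) i].
set P := [set x | [forall z, ~~ pos_rel gamma x z]].
set Q := [set x | [forall z, ~~ neg_rel gamma x z]].
have hQ : (#|Q| + 1 <= ncomp (neg_rel gamma))%N.
  by apply: (@ncomp_ge N (neg_rel gamma) iN jN) => // x y; rewrite /neg_rel sym.
have hP : (#|P| + 1 <= ncomp (pos_rel gamma))%N.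
  by apply: (@ncomp_ge N (pos_rel gamma) ip jp) => // x y; rewrite /pos_rel sym.
have hN : (N <= #|M| + #|P| + #|Q|)%N.
  rewrite -{1}(card_ord N) -cardsT.
  apply: (leq_trans _ (leq_add (leq_card_setU M P) (leqnn _))).
  apply: (leq_trans _ (leq_card_setU (M :|: P) Q)).
  apply: subset_leq_card; apply/subsetP => x _; rewrite !inE.
  case: (boolP [forall z, ~~ pos_rel gamma x z]) => [h|/forallPn [j /negbNE hj]]; first by apply/orP; left; apply/orP; right.
  case: (boolP [forall z, ~~ neg_rel gamma x z]) => [h|/forallPn [k /negbNE hk]]; first by apply/orP; right.
  by rewrite (@gersh_mixed R N gamma x j k sg hj hk).
rewrite /flexibility /n_gersh -/M.
lia.
Qed.
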